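(* Let $l,m,k$ be non-negative integers with $2l\le m\le 2k$. Then $$S(k,m,l)=\binom{m}{l}\binom{2k-m+1}{k-m+l}+\sum_{d'=0}^{l-1}\binom{m}{d'}\left[\binom{2k-m+1}{k+1-d'}-\binom{2k-m+1}{k-d'}\right].$$
   Context: A Dyck path of semilength $k$ (Dyck $k$-path) is a lattice path in $\mathbb{Z}^2$ starting at $(0,0)$, ending at $(2k,0)$, never going below the $x$-axis, each of whose $2k$ steps is either a rise $(1,1)$ or a fall $(1,-1)$. For a Dyck $k$-path $D$ and non-negative integers $l\le m\le 2k$, $S(D,m,l)$ denotes the number of intervals of length $m$ in $D$ (i.e. blocks of $m$ consecutive steps of $D$, one for each starting position $s\in\{1,\dots,2k-m+1\}$) that contain exactly $l$ falls; and $S(k,m,l)=\sum_{D} S(D,m,l)$, the sum over all Dyck $k$-paths $D$. Convention: $\binom{x}{y}=0$ for integers $x\ge 0$ and $y<0$, and $\binom{x}{y}=0$ if $y>x\ge 0$. *)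

(* Defs.v *)
From mathcomp Require Import all_boot all_order all_algebra.
Set Implicit Arguments. Unset Strict Implicit. Unset Printing Implicit Defensive.
Import GRing.Theory Num.Theory.

(* A path is a sequence of steps: true = rise (1,1), false = fall (1,-1). *)

Definition is_dyck (s : seq bool) : bool :=
  all (fun i => count negb (take i s) <= count id (take i s)) (iota 0 (size s).+1)
  && (count negb s == count id s).

Definition S_path (D : seq bool) (m l : nat) : nat :=
  count (fun s => count negb (take m (drop s D)) == l) (iota 0 ((size D).+1 - m)).

Definition S_total (k m l : nat) : nat :=
  \sum_(D : (k.*2).-tuple bool | is_dyck D) S_path D m l.

(* Binomial with integer lower index: zero for negative lower index
   ('C(n, j) is already zero for j > n). *)
Definition binz (n : nat) (y : int) : int :=
  match y with Posz j => ('C(n, j))%:Z | Negz _ => 0 end.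

(* Main.v *)
Require Import Defs.
From mathcomp Require Import all_boot all_order all_algebra.
From mathcomp Require Import zify ring lra.
Import GRing.Theory Num.Theory.

Set Implicit Arguments. Unset Strict Implicit.

Fixpoint ok (a : nat) (w : seq bool) (b : nat) : bool :=
  match w with
  | [::] => a == b
  | true :: w' => ok a.+1 w' b
  | false :: w' => (0 < a) && ok a.-1 w' b
  end.

Fixpoint W (n : nat) : seq (seq bool) :=
  if n is n'.+1 then map (cons true) (W n') ++ map (cons false) (W n') else [:: [::]].

Definition P n a b := \sum_(w <- W n) (ok a w b : nat).

Definition hgt a (x : seq bool) := a + count id x - count negb x.

Lemma count_sum (T : Type) (p : pred T) (s : seq T) : count p s = \sum_(x <- s) (p x : nat).
Proof. by elim: s => [|x s IH]; rewrite ?big_nil ?big_cons //= IH. Qed.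

Lemma P_rec n a b : P n.+1 a b = P n a.+1 b + (if 0 < a then P n a.-1 b else 0).
Proof.
rewrite /P /= big_cat !big_map /=; congr (_ + _).
case: a => [|a] /=; last by [].
by rewrite big1.
Qed.

Lemma P0 a b : P 0 a b = (a == b).
Proof. by rewrite /P /= big_cons big_nil addn0. Qed.

Lemma ok_hgt a x c : ok a x c -> a + count id x = c + count negb x.
Proof.
elim: x a => [|[] x IH] a /=; first by move/eqP->; rewrite !addn0.
  by move/IH; lia.
by case/andP=> Ha /IH; lia.
Qed.

Lemma ok_cat a x y b : ok a (x ++ y) b = ok a x (hgt a x) && ok (hgt a x) y b.
Proof.
rewrite /hgt; elim: x a => [|[] x IH] a /=.
- by rewrite addn0 subn0 eqxx.
- rewrite IH; congr (ok _ _ _ && ok _ _ _); lia.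
- case: a => [|a] //=; rewrite IH.
Qed.

Lemma W_mem n w : (w \in W n) = (size w == n).
Proof.
elim: n w => [|n IH] w /=; first by rewrite inE; case: w.
have ic (c : bool) : injective (cons c) by move=> ? ? [].
rewrite mem_cat; case: w => [|[] w] /=.
- by apply/negP => /orP[] /mapP[? _].
- rewrite (mem_map (ic true)) IH /=; apply/orP/idP => [[//|/mapP[? _ //]]|]; by left.
- rewrite (mem_map (ic false)) IH /=; apply/orP/idP => [[/mapP[? _ //]|//]|]; by right.
Qed.

Lemma W_uniq n : uniq (W n).
Proof.
elim: n => [//|n IH] /=.
have ic (c : bool) : injective (cons c) by move=> ? ? [].
rewrite cat_uniq !map_inj_uniq // IH /= andbT.
apply/hasPn => w /mapP[v _ ->]; apply/mapP => [[? _ //]].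
Qed.

Set Implicit Arguments. Unset Strict Implicit.

Lemma tuple_sum n (p : pred (seq bool)) (F : seq bool -> nat) :
  \sum_(D : n.-tuple bool | p D) F D = \sum_(w <- W n | p w) F w.
Proof.
have pe : perm_eq (map val (enum {: n.-tuple bool})) (W n).
  apply: uniq_perm; first by rewrite map_inj_uniq ?enum_uniq //; exact: val_inj.
    exact: W_uniq.
  move=> w; rewrite W_mem; apply/mapP/idP => [[D _ ->]|/eqP Hw]; first by rewrite size_tuple.
  by exists (Tuple (introT eqP Hw)); rewrite ?mem_enum.
rewrite -(perm_big _ pe) big_map.
by rewrite big_enum_cond; apply: eq_bigl => D; rewrite inE.
Qed.

Lemma W_cat p q (F : seq bool -> nat) :
  \sum_(w <- W (p + q)) F w = \sum_(x <- W p) \sum_(y <- W q) F (x ++ y).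
Proof.
elim: p F => [|p IH] F /=; first by rewrite big_cons big_nil addn0.
by rewrite !big_cat !big_map !IH.
Qed.

Lemma ok_iff a w b : ok a w b <->
  ((forall i, count negb (take i w) <= a + count id (take i w)) /\
   a + count id w = b + count negb w).
Proof.
elim: w a => [|[] w IH] a /=.
- split => [/eqP ->|[_ H]]; last by apply/eqP; lia.
  by split => // i; rewrite take_nil.
- rewrite IH; split => [[H1 H2]|[H1 H2]]; split; try lia.
  + by case=> [|i] //=; have := H1 i; lia.
  + by move=> i; have := H1 i.+1 => /=; lia.
- split => [/andP[Ha /IH[H1 H2]]|[H1 H2]].
  + split; last lia.
    by case=> [|i] //=; have := H1 i; lia.
  + have Ha : 0 < a by have := H1 1 => /=; rewrite take0 /=; lia.
    rewrite Ha /=; apply/IH; split; last lia.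
    by move=> i; have := H1 i.+1 => /=; lia.
Qed.

Lemma dyck_ok w : is_dyck w = ok 0 w 0.
Proof.
apply/idP/idP.
- case/andP => /allP H /eqP H2; apply/ok_iff; split; last by lia.
  move=> i; case: (leqP i (size w)) => hi.
    by apply: H; rewrite mem_iota.
  rewrite take_oversize; last lia.
  have := H (size w); rewrite mem_iota take_size /=; apply; lia.
- case/ok_iff => H1 H2; apply/andP; split; last by apply/eqP; lia.
  by apply/allP => i _; apply: H1.
Qed.

Lemma ok_eq a x c : ok a x c -> c = hgt a x.
Proof. by move/ok_hgt; rewrite /hgt; lia. Qed.

Lemma ok_le a x c : ok a x c -> c <= a + size x.
Proof. by move/ok_hgt; rewrite -(count_predC id x); lia. Qed.

Unset Implicit Arguments.
Local Open Scope ring_scope.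

Lemma binz_nat n (y : int) (j : nat) : y = j%:Z -> binz n y = ('C(n, j))%:Z.
Proof. by move->. Qed.

Lemma binz_neg n (y : int) : y < 0 -> binz n y = 0.
Proof. by case: y. Qed.

Lemma int_cases (y : int) : y < 0 \/ exists j : nat, y = j%:Z.
Proof. by case: y => j; [right; exists j | left]. Qed.

Lemma binzS n (y : int) : binz n.+1 y = binz n y + binz n (y - 1).
Proof.
case: (int_cases y) => [hy|[[|j] ->]].
- by rewrite !binz_neg ?addr0 //; lia.
- by rewrite (binz_neg _ (0 - 1)) // addr0 /= !bin0.
- rewrite (binz_nat _ (j.+1%:Z - 1) j); last lia.
  by rewrite /= binS PoszD.
Qed.

Lemma binz_big n (y : int) : n%:Z < y -> binz n y = 0.
Proof.
case: (int_cases y) => [hy|[j ->]] h; first by rewrite binz_neg.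
by rewrite /= bin_small //; lia.
Qed.

Lemma binz_sym n (y : int) : binz n y = binz n (n%:Z - y).
Proof.
case: (int_cases y) => [hy|[j ->]].
  by rewrite binz_neg // binz_big //; lia.
case: (leqP j n) => hj.
  by rewrite (binz_nat _ (n%:Z - j%:Z) (n - j)%N) ?bin_sub //; lia.
by rewrite binz_big ?binz_neg //; lia.
Qed.

Lemma P_closed n : forall (a b : nat) (f : int), a%:Z + n%:Z = b%:Z + 2 * f ->
  (P n a b)%:Z = binz n f - binz n (f - a%:Z - 1).
Proof.
elim: n => [|n IH] a b f h.
- rewrite P0.
  case: (int_cases f) => [hf|[j hj]].
    rewrite !binz_neg //; try lia.
  subst f. case: j h => [|j] h.
    rewrite (binz_neg _ (0 - a%:Z - 1)); last lia.
    by have -> : (a == b) = true by apply/eqP; lia.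
  rewrite /= bin0n /=.
  case: (int_cases (j.+1%:Z - a%:Z - 1)) => [hy|[i hi]].
    by rewrite binz_neg // ; have -> : (a == b) = false by apply/eqP; lia.
  rewrite hi /= bin0n.
  have -> : (a == b) = false by apply/eqP; lia.
  have -> : (i == 0)%N = false by apply/eqP; lia.
  by [].
- rewrite P_rec PoszD (IH a.+1 b f); last lia.
  case: a h => [|a] h /=.
  + rewrite !binzS.
    have -> : f - 0%:Z - 1 - 1 = f - 1%:Z - 1 by lia.
    have -> : f - 0%:Z - 1 = f - 1 by lia.
    ring.
  + rewrite (IH a b (f - 1)); last lia.
    rewrite !binzS.
    have -> : f - a.+1%:Z - 1 - 1 = f - a.+2%:Z - 1 by lia.
    have -> : f - 1 - a%:Z - 1 = f - a.+1%:Z - 1 by lia.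
    ring.
Qed.

Lemma P_par n a b : ~~ odd (a + n + b)%N \/ P n a b = 0%N.
Proof.
case: (boolP (odd (a + n + b))) => h; [right|by left].
rewrite /P big_seq big1 // => w; rewrite W_mem => /eqP Hw.
case: (boolP (ok a w b)) => // /ok_hgt E.
have C : (count id w + count negb w = size w)%N by exact: (count_predC id w).
move: h; have -> : (a + n + b = 2 * (b + count negb w))%N by lia.
by rewrite oddM.
Qed.

Lemma P_zero n a b : odd (a + n + b) -> P n a b = 0%N.
Proof. by case: (P_par n a b) => [/negbTE ->|]. Qed.

Lemma P_sym n a b : P n a b = P n b a.
Proof.
case: (boolP (odd (a + n + b))) => he.
  rewrite !P_zero //; by have -> : (b + n + a = a + n + b)%N by lia.
suff: (P n a b)%:Z = (P n b a)%:Z by case.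
set g := ((a + n + b)./2)%N.
have hg : (a + n + b = g.*2)%N.
  by have := odd_double_half (a + n + b); rewrite (negbTE he) add0n /g => ->.
rewrite (P_closed n a b (g%:Z - b%:Z)); last lia.
rewrite (P_closed n b a (n%:Z - (g%:Z - b%:Z))); last lia.
rewrite -binz_sym.
by congr (_ - binz n _); lia.
Qed.

Local Close Scope ring_scope.


Lemma P1 x y : P 1 x y = ((x.+1 == y) + (if 0 < x then (x.-1 == y) : nat else 0))%N.
Proof. by rewrite P_rec !P0. Qed.

Lemma K N : forall a h e, (\sum_(s < N.+1) P s a h * P (N - s) e 0 +
  (if h < a then P N.+1 (a - h - 1) e else 0) = P N.+1 a (h + e + 1))%N.
Proof.
elim: N => [|N IH] a h e.
  rewrite big_ord1 /= !P1 !P0.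
  by do !case: eqP => //= ?; do !case: ifP => //= ?; lia.
rewrite big_ord_recl /=.
under eq_bigr => i _ do rewrite /bump /= subSS P_rec mulnDl.
rewrite big_split /= P0 subn0.
case: a => [|a].
  rewrite (P_rec N.+1 0) /= addn0.
  have := IH 1 h e.
  have -> : \sum_(i < N.+1) (if 0 < 0 then P i 0.-1 h else 0) * P (N - i) e 0 = 0 by rewrite big1.
  rewrite !addn0 => <-; case: h => [|h] /=; last by rewrite mul0n add0n addn0.
  by rewrite mul1n P_sym addnC.
rewrite (P_rec N.+1 a.+1) /=.
have := IH a.+2 h e; have := IH a h e.
move=> <- <-.
case: (ltngtP a.+1 h) => H.
- have -> : (h < a) = false by lia.
  have -> : (h < a.+2) = false by lia.
  rewrite /= ?mul0n ?mul1n; lia.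
- have -> : (h < a.+2) = true by lia.
  rewrite (_ : a.+1 - h - 1 = a - h)%N; last lia.
  rewrite (P_rec N.+1 (a - h)) (_ : a.+2 - h - 1 = (a - h).+1)%N; last lia.
  case: (ltnP h a) => H2.
    rewrite (_ : (a - h).-1 = a - h - 1)%N; last lia.
    have -> : (0 < a - h) = true by lia.
    rewrite /= ?mul0n ?mul1n; lia.
  have -> : (0 < a - h) = false by lia.
  rewrite /= ?mul0n ?mul1n; lia.
- subst h.
  have -> : (a.+1 < a.+2) = true by lia.
  have -> : (a.+1 < a) = false by lia.
  rewrite (_ : a.+2 - a.+1 - 1 = 0)%N; last lia.
  rewrite P_sym /= ?mul1n; lia.
Qed.

Set Implicit Arguments. Unset Strict Implicit.

Lemma win m l a x B C : size B = m -> l.*2 <= m ->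
  (ok a (x ++ B ++ C) 0 && (count negb B == l)) =
  [&& ok a x (hgt a x), ok (hgt a x) B (hgt a x + (m - l.*2)) & ok (hgt a x + (m - l.*2)) C 0].
Proof.
move=> hB hl; rewrite !ok_cat.
set c := hgt a x.
case: (ok a x c) => //=.
have sz : count id B + count negb B = m by rewrite -hB; exact: (count_predC id B).
case: eqP => hf.
  rewrite andbT; congr (ok _ _ _ && ok _ _ _); rewrite /hgt; lia.
rewrite andbF; symmetry; apply/negbTE/negP => /andP[/ok_hgt E _]; lia.
Qed.

Lemma group s a (G : nat -> nat) Hb : a + s < Hb ->
  \sum_(A <- W s) ok a A (hgt a A) * G (hgt a A) = \sum_(h < Hb) P s a h * G h.
Proof.
move=> hs.
under [RHS]eq_bigr => h _ do rewrite /P big_distrl /=.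
rewrite exchange_big /=; apply: eq_big_seq => A; rewrite W_mem => /eqP sA.
case: (boolP (ok a A (hgt a A))) => okc.
  have ch : hgt a A < Hb.
    by have := ok_le okc; rewrite sA; lia.
  rewrite (bigD1 (Ordinal ch)) //= okc big1 ?addn0 // => i hi.
  case: (boolP (ok a A i)) => // /ok_eq E; exfalso; move: hi; apply/negP; rewrite negbK.
  by apply/eqP/val_inj => /=.
rewrite mul0n big1 // => i _.
case: (boolP (ok a A i)) => // oki; exfalso; move: okc; rewrite -(ok_eq oki) oki.
by [].
Qed.

Lemma S_nat k m l : l.*2 <= m -> m <= k.*2 ->
  S_total k m l = \sum_(h < k.*2.+1)
     P m h (h + (m - l.*2)) * P (k.*2 - m).+1 0 (h + (h + (m - l.*2)) + 1).
Proof.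
move=> h1 h2.
set N := (k.*2 - m)%N; set d := (m - l.*2)%N.
rewrite /S_total (@tuple_sum _ is_dyck (fun w => S_path w m l)) big_mkcond /=.
have step1 : \sum_(w <- W k.*2) (if is_dyck w then S_path w m l else 0) =
   \sum_(w <- W k.*2) \sum_(s < N.+1) (ok 0 w 0 && (count negb (take m (drop s w)) == l) : nat).
  apply: eq_big_seq => w; rewrite W_mem => /eqP sw.
  rewrite dyck_ok /S_path count_sum sw (_ : (k.*2).+1 - m = N.+1); last by rewrite /N; lia.
  rewrite (_ : iota 0 N.+1 = index_iota 0 N.+1); last by rewrite /index_iota subn0.
  rewrite big_mkord.
  case: (ok 0 w 0) => /=; last by rewrite big1.
  by [].
rewrite step1 exchange_big /=.
have step2 : forall s : 'I_N.+1,
   \sum_(w <- W k.*2) (ok 0 w 0 && (count negb (take m (drop s w)) == l) : nat) =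
   \sum_(h < k.*2.+1) P s 0 h * (P m h (h + d) * P (N - s) (h + d) 0).
  move=> s; have hs := ltn_ord s.
  rewrite (_ : k.*2 = s + (m + (N - s))); last by move: hs; rewrite /N; lia.
  rewrite W_cat; under eq_bigr => x _ do rewrite W_cat.
  rewrite -(@group s 0 (fun h => P m h (h + d) * P (N - s) (h + d) 0)); last lia.
  apply: eq_big_seq => x; rewrite W_mem => /eqP sx.
  rewrite {1}/P big_distrl big_distrr /=; apply: eq_big_seq => B; rewrite W_mem => /eqP sB.
  rewrite /P !big_distrr /=; apply: eq_bigr => C _.
  have -> : drop s (x ++ B ++ C) = B ++ C by rewrite -sx drop_size_cat.
  have -> : take m (B ++ C) = B by rewrite -sB take_size_cat.
  rewrite (@win m l) //.
  by rewrite -!mulnb mulnA.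
under eq_bigr => s _ do rewrite step2.
rewrite exchange_big /=; apply: eq_bigr => h _.
under eq_bigr => s _ do rewrite mulnCA.
rewrite -big_distrr /=; congr (_ * _).
by have := K N 0 h (h + d); rewrite addn0.
Qed.

Unset Implicit Arguments.
Local Open Scope ring_scope.

Lemma tel (u : nat -> int) H : \sum_(h < H) (u h - u h.+1) = u 0%N - u H.
Proof.
elim: H => [|H IH]; first by rewrite big_ord0 subrr.
by rewrite big_ord_recr /= IH; ring.
Qed.

Theorem mainTheorem2 (l m k : nat) (h1 : (l.*2 <= m)%N) (h2 : (m <= k.*2)%N) :
  (S_total k m l)%:Z =
    binz m l%:Z * binz (k.*2 - m + 1) (k%:Z - m%:Z + l%:Z)
    + \sum_(d' < l) binz m d'%:Z *
        (binz (k.*2 - m + 1) (k%:Z + 1 - d'%:Z) - binz (k.*2 - m + 1) (k%:Z - d'%:Z)).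
Proof.
rewrite S_nat // -natz natr_sum addn1.
set n := (k.*2 - m).+1.
set r := k%:Z - m%:Z + l%:Z.
have E : forall h : 'I_k.*2.+1,
    ((P m h (h + (m - l.*2)) * P n 0 (h + (h + (m - l.*2)) + 1))%N%:R : int) =
    (binz m l - binz m (l%:Z - h%:Z - 1)) * (binz n (r - h%:Z) - binz n (r - h.+1%:Z)).
  move=> h; rewrite natrM !natz.
  rewrite (P_closed m h (h + (m - l.*2)) l); last lia.
  rewrite (P_closed n 0 (h + (h + (m - l.*2)) + 1) (r - h%:Z)); last by rewrite /n /r; lia.
  by congr (_ * (_ - binz n _)); lia.
under eq_bigr => h _ do rewrite E mulrBl.
rewrite sumrB -mulr_sumr.
rewrite (tel (fun h => binz n (r - h%:Z))) (binz_neg n (r - k.*2.+1%:Z)) ?subr0; last by rewrite /r; lia.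
rewrite (bigID (fun i : 'I_k.*2.+1 => (i < l)%N)) /=.
rewrite [X in _ - (_ + X)]big1 ?addr0; last first.
  by move=> i hi; rewrite binz_neg ?mul0r //; move: hi; lia.
rewrite -(@big_ord_widen _ 0 +%R l k.*2.+1 (fun i => binz m (l%:Z - i%:Z - 1) * (binz n (r - i%:Z) - binz n (r - i.+1%:Z)))); last lia.
rewrite (reindex_inj rev_ord_inj) /= -sumrN.
congr (_ + _); apply: eq_bigr => d _.
have hd := ltn_ord d.
rewrite (binz_nat m (l%:Z - (l - d.+1)%N%:Z - 1) d); last lia.
rewrite binz_sym (binz_sym n (r - (l - d.+1).+1%:Z)).
rewrite (_ : n%:Z - (r - (l - d.+1)%N%:Z) = k%:Z - d%:Z); last by rewrite /n /r; lia.
rewrite (_ : n%:Z - (r - (l - d.+1).+1%:Z) = k%:Z + 1 - d%:Z); last by rewrite /n /r; lia.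
ring.
Qed.
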